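(* Let $(X,\le)$ be a partially ordered set such that $\widehat D$ is directed for every directed $D\subset X$, and let $(\overline X,\iota)$ be its directed completion. Then: (1) $\iota(X)^\uparrow=\overline X$, where for $A\subset\overline X$, $A^\uparrow$ denotes the set of suprema of directed subsets of $A$; (2) a directed completion of $X$ is given by $\{A\subset X:\ A=\widehat A\text{ and }A\text{ is directed}\}$ ordered by inclusion, together with the map $x\mapsto\downarrow x$; (3) if $(Y,\le)$ is a dcpo and $j:X\to Y$ a map, then $(Y,j)$ is a directed completion of $X$ if and only if $j(X)$ is dense in $Y$ and for every directed $B\subset X$ and every $a\in X$ we have $j(a)\in\widehat{j(B)}$ (in $Y$) if and only if $a\in\widehat B$ (in $X$).
   Context: Let $(X,\le)$ be a partially ordered set. A subset $D\subset X$ is directed if every finite subset of $D$ (including the empty one) has an upper bound in $D$; in particular directed sets are nonempty. $A\subset X$ is a lower set if $x\in A$ and $y\le x$ imply $y\in A$; $\downarrow a:=\{x\in X:x\le a\}$. $(X,\le)$ is a directed complete partial order (dcpo) if every directed subset has a supremum. A subset $A\subset X$ is directed-sup-closed if the supremum of every directed $D\subset A$ which has a supremum in $X$ belongs to $A$. For $A\subset X$, $\overline A$ is the smallest directed-sup-closed subset of $X$ containing $A$, and $\widehat A$ is the smallest subset of $X$ containing $A$ which is both a lower set and directed-sup-closed. $A$ is dense if $\overline A=X$. A map $T:X_1\to X_2$ between partially ordered sets has the Monotone Convergence Property (Mcp) if for every directed $D\subset X_1$ having a supremum, $T(D)$ has a supremum and $T(\sup D)=\sup T(D)$. A directed completion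 of $(X,\le)$ is a dcpo $(\overline X,\bar\le)$ together with a map $\iota:X\to\overline X$ with the Mcp such that for every dcpo $Z$ and every map $T:X\to Z$ with the Mcp there is a unique map $\bar T:\overline X\to Z$ with the Mcp satisfying $\bar T\circ\iota=T$. *)

(* Defs.v *)
Section Order.
Context {X : Type} (le : X -> X -> Prop).

Definition is_poset : Prop :=
  (forall x, le x x) /\
  (forall x y, le x y -> le y x -> x = y) /\
  (forall x y z, le x y -> le y z -> le x z).

Definition subset (A B : X -> Prop) : Prop := forall x, A x -> B x.

Definition directed (D : X -> Prop) : Prop :=
  (exists x, D x) /\
  (forall x y, D x -> D y -> exists z, D z /\ le x z /\ le y z).

Definition is_sup (D : X -> Prop) (s : X) : Prop :=
  (forall x, D x -> le x s) /\
  (forall u, (forall x, D x -> le x u) -> le s u).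

Definition dcpo : Prop :=
  is_poset /\ forall D, directed D -> exists s, is_sup D s.

Definition lower_set (A : X -> Prop) : Prop :=
  forall x y, A x -> le y x -> A y.

Definition down (a : X) : X -> Prop := fun x => le x a.

Definition dsup_closed (A : X -> Prop) : Prop :=
  forall D s, directed D -> subset D A -> is_sup D s -> A s.

Definition dclosure (A : X -> Prop) : X -> Prop :=
  fun x => forall B, subset A B -> dsup_closed B -> B x.

Definition hat (A : X -> Prop) : X -> Prop :=
  fun x => forall B, subset A B -> lower_set B -> dsup_closed B -> B x.

Definition dense (A : X -> Prop) : Prop := forall x, dclosure A x.

Definition up (A : X -> Prop) : X -> Prop :=
  fun y => exists D, directed D /\ subset D A /\ is_sup D y.

End Order.

Definition image {X Y : Type} (f : X -> Y) (A : X -> Prop) : Y -> Prop :=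
  fun y => exists x, A x /\ y = f x.

Definition range {X Y : Type} (f : X -> Y) : Y -> Prop :=
  fun y => exists x, y = f x.

Definition Mcp {X1 X2 : Type} (le1 : X1 -> X1 -> Prop) (le2 : X2 -> X2 -> Prop)
  (T : X1 -> X2) : Prop :=
  forall D s, directed le1 D -> is_sup le1 D s -> is_sup le2 (image T D) (T s).

Definition directed_completion {X Xb : Type} (le : X -> X -> Prop)
  (leb : Xb -> Xb -> Prop) (iota : X -> Xb) : Prop :=
  dcpo leb /\ Mcp le leb iota /\
  forall (Z : Type) (leZ : Z -> Z -> Prop), dcpo leZ ->
  forall T : X -> Z, Mcp le leZ T ->
    exists Tb : Xb -> Z,
      (Mcp leb leZ Tb /\ forall x, Tb (iota x) = T x) /\
      (forall Tb' : Xb -> Z, Mcp leb leZ Tb' -> (forall x, Tb' (iota x) = T x) ->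
         forall y, Tb' y = Tb y).

Definition hatDirSets {X : Type} (le : X -> X -> Prop) : Type :=
  { A : X -> Prop | (forall x, A x <-> hat le A x) /\ directed le A }.

Definition hatDirSets_le {X : Type} (le : X -> X -> Prop)
  (A B : hatDirSets le) : Prop :=
  subset (proj1_sig A) (proj1_sig B).

Lemma down_hatDir {X : Type} (le : X -> X -> Prop) (HX : is_poset le) (a : X) :
  (forall x, down le a x <-> hat le (down le a) x) /\ directed le (down le a).
Proof.
  destruct HX as [Hr [_ Ht]].
  split.
  - intro x; split.
    + intros Hx B HB _ _. exact (HB x Hx).
    + intro H. apply H.
      * intros y Hy; exact Hy.
      * intros y z Hy Hz. unfold down in *. eauto.
      * intros D s _ HD [_ Hs]. apply Hs. exact HD.
  - split.
    + exists a. apply Hr.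
    + intros x y Hx Hy. exists a. unfold down. auto.
Qed.

Definition principal {X : Type} (le : X -> X -> Prop) (HX : is_poset le)
  (a : X) : hatDirSets le :=
  exist _ (down le a) (down_hatDir le HX a).

(* Main.v *)
Require Import Defs.
From Stdlib Require Import FunctionalExtensionality PropExtensionality ProofIrrelevance IndefiniteDescription.

Section Gen.
Context {X : Type} (le : X -> X -> Prop).

Lemma is_sup_ext (D D' : X -> Prop) s : (forall x, D x <-> D' x) -> is_sup le D s -> is_sup le D' s.
Proof. intros E [H1 H2]; split.
  - intros x Hx; apply H1, E, Hx.
  - intros u Hu; apply H2; intros x Hx; apply Hu, E, Hx. Qed.

Lemma directed_ext D D' : (forall x, D x <-> D' x) -> directed le D -> directed le D'.
Proof. intros E [[x Hx] H]; split.
  - exists x; apply E; auto.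
  - intros a b Ha Hb. destruct (H a b) as [z [Hz [H1 H2]]]; try apply E; auto.
    exists z; repeat split; auto; apply E; auto. Qed.

Lemma sup_unique (Hanti : forall x y, le x y -> le y x -> x = y) D s t :
  is_sup le D s -> is_sup le D t -> s = t.
Proof. intros [H1 H2] [H3 H4]. apply Hanti; [apply H2 | apply H4]; assumption. Qed.

Lemma hat_incl A : subset A (hat le A).
Proof. intros x Hx B HB _ _. apply HB, Hx. Qed.
Lemma hat_lower A : lower_set le (hat le A).
Proof. intros x y Hx Hy B HB HL HD. apply (HL x y); [apply Hx; auto | auto]. Qed.
Lemma hat_dsup A : dsup_closed le (hat le A).
Proof. intros D s HD Hs Hsup B HB HL HC. apply (HC D s HD); auto.
  intros x Hx; apply Hs; auto. Qed.
Lemma hat_min A B : subset A B -> lower_set le B -> dsup_closed le B -> subset (hat le A) B.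
Proof. intros H1 H2 H3 x Hx; apply Hx; auto. Qed.
Lemma hat_idem A x : hat le A x <-> hat le (hat le A) x.
Proof. split.
  - apply hat_incl.
  - apply hat_min; [intros y Hy; exact Hy | apply hat_lower | apply hat_dsup]. Qed.

Lemma mcp_mono {Y} (leY : Y -> Y -> Prop) (T : X -> Y) (Hr : forall x, le x x) :
  Mcp le leY T -> forall x y, le x y -> leY (T x) (T y).
Proof.
  intros HT x y Hxy.
  pose (D := fun z => z = x \/ z = y).
  assert (HD : directed le D).
  { split. exists x; left; auto. intros a b Ha Hb. exists y. split. right; auto.
    destruct Ha as [Ha|Ha]; destruct Hb as [Hb|Hb]; rewrite Ha, Hb; auto. }
  assert (Hs : is_sup le D y).
  { split. intros z [Hz|Hz]; rewrite Hz; auto. intros u Hu; apply Hu; right; auto. }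
  destruct (HT D y HD Hs) as [H1 _]. apply H1. exists x; split; auto. left; auto.
Qed.

Lemma image_directed {Y} (leY : Y -> Y -> Prop) (T : X -> Y) D :
  (forall x y, le x y -> leY (T x) (T y)) -> directed le D -> directed leY (image T D).
Proof.
  intros HT [[x Hx] H]. split. exists (T x), x; auto.
  intros a b [x1 [H1 ->]] [x2 [H2 ->]]. destruct (H x1 x2 H1 H2) as [z [Hz [Hz1 Hz2]]].
  exists (T z). split. exists z; auto. auto.
Qed.

Lemma mcp_id : Mcp le le (fun x => x).
Proof. intros D s _ Hs. eapply is_sup_ext; [|exact Hs]. intros z; split.
  - intros Hz; exists z; auto.
  - intros [x [Hx ->]]; auto. Qed.

End Gen.

Lemma mcp_comp {X Y Z} (le : X -> X -> Prop) (leY : Y -> Y -> Prop) (leZ : Z -> Z -> Prop) (g : X -> Y) (f : Y -> Z)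
  (Hr : forall x, le x x) :
  Mcp le leY g -> Mcp leY leZ f -> Mcp le leZ (fun x => f (g x)).
Proof.
  intros Hg Hf D s HD Hs.
  pose proof (Hf (image g D) (g s) (image_directed le leY g D (mcp_mono le leY g Hr Hg) HD) (Hg D s HD Hs)) as H.
  eapply (is_sup_ext leZ); [|exact H].
  intros z; split.
  - intros [y [[x [Hx ->]] ->]]. exists x; auto.
  - intros [x [Hx ->]]. exists (g x); split; auto. exists x; auto.
Qed.


Lemma general_completion {X Y : Type} (le : X -> X -> Prop) (leY : Y -> Y -> Prop) (j : X -> Y)
  (Phi : Y -> X -> Prop) (HX : is_poset le) (HY : dcpo leY) :
  Mcp le leY j ->
  (forall y, directed le (Phi y) /\ is_sup leY (image j (Phi y)) y) ->
  (forall d y, leY d y -> subset (Phi d) (Phi y)) ->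
  (forall D y, directed leY D -> is_sup leY D y ->
     subset (Phi y) (hat le (fun a => exists d, D d /\ Phi d a))) ->
  (forall x, Phi (j x) x /\ forall a, Phi (j x) a -> le a x) ->
  directed_completion le leY j.
Proof.
  intros Hj Ha Hmono Hc Hd.
  split; [exact HY|]. split; [exact Hj|].
  intros Z leZ HZ T HT.
  destruct HX as [Hr [Hanti Ht]].
  destruct HZ as [[HrZ [HantiZ HtZ]] HsupZ].
  assert (HTm := mcp_mono le leZ T Hr HT).
  assert (Hex : forall y, exists s, is_sup leZ (image T (Phi y)) s).
  { intros y. apply HsupZ. apply (image_directed le); auto. apply Ha. }
  pose (Tb := fun y => proj1_sig (constructive_indefinite_description _ (Hex y))).
  assert (HTb : forall y, is_sup leZ (image T (Phi y)) (Tb y)).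
  { intros y. unfold Tb. destruct (constructive_indefinite_description _ (Hex y)); auto. }
  exists Tb. split. split.
  - intros D y HD Hy. split.
    + intros z [d [Hd' ->]]. apply (proj2 (HTb d)). intros w [a [Ha' ->]].
      apply (proj1 (HTb y)). exists a; split; auto. apply (Hmono d y); auto. apply (proj1 Hy); auto.
    + intros u Hu. apply (proj2 (HTb y)). intros w [a [Ha' ->]].
      assert (Hs : hat le (fun a => exists d, D d /\ Phi d a) a) by (apply (Hc D y HD Hy); auto).
      apply (Hs (fun b => leZ (T b) u)).
      * intros b [d [Hd' Hb]]. apply HtZ with (Tb d). apply (proj1 (HTb d)). exists b; auto.
        apply Hu. exists d; auto.
      * intros b c Hb Hcb. apply HtZ with (T b); auto.
      * intros E s HE HEs Hs'. pose proof (HT E s HE Hs') as [_ H]. apply H.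
        intros w [e [He ->]]. exact (HEs e He).
  - intros x. apply (sup_unique leZ HantiZ (image T (Phi (j x)))). apply HTb.
    split.
    + intros w [a [Ha' ->]]. apply HTm. apply (proj2 (Hd x)); auto.
    + intros u Hu. apply Hu. exists x; split; auto. apply Hd.
  - intros Tb' HTb' HTbj y.
    destruct (Ha y) as [HPd HPs].
    pose proof (HTb' (image j (Phi y)) y (image_directed le leY j _ (mcp_mono le leY j Hr Hj) HPd) HPs) as H.
    apply (sup_unique leZ HantiZ (image T (Phi y))); [| apply HTb].
    eapply is_sup_ext; [|exact H]. intros z; split.
    + intros [w [[a [Ha' ->]] ->]]. exists a; split; auto.
    + intros [a [Ha' ->]]. exists (j a); split; auto. exists a; auto.
Qed.

Section Main.
Context {X : Type} (le : X -> X -> Prop) (HX : is_poset le)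
  (Hhat : forall D : X -> Prop, directed le D -> directed le (hat le D)).

Notation H := (hatDirSets le).
Notation leH := (hatDirSets_le le).

Lemma hd_lower (A : H) : lower_set le (proj1_sig A).
Proof. destruct A as [B [HA HB0]]; simpl. intros x y Hx Hy. apply HA.
  apply (hat_lower le B x y); auto. apply HA; auto. Qed.

Lemma hd_dsup (A : H) : dsup_closed le (proj1_sig A).
Proof. destruct A as [B [HA HB0]]; simpl. intros D s HD HDs Hs. apply HA.
  apply (hat_dsup le B D s HD); auto. intros x Hx. apply HA; auto. Qed.

Definition Uni (F : H -> Prop) : X -> Prop := fun a => exists d, F d /\ proj1_sig d a.

Lemma uni_directed F : directed leH F -> directed le (Uni F).
Proof.
  intros [[A HA] HF]. pose proof (proj2 (proj2_sig A)) as [[a Ha] _]. split.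
  - exists a, A; auto.
  - intros x y [A1 [H1 Hx]] [A2 [H2 Hy]]. destruct (HF A1 A2 H1 H2) as [A3 [H3 [S1 S2]]].
    destruct (proj2 (proj2 (proj2_sig A3)) x y (S1 x Hx) (S2 y Hy)) as [z [Hz [Hxz Hyz]]].
    exists z; split; auto. exists A3; auto.
Qed.

Definition supH (F : H -> Prop) (HF : directed leH F) : H :=
  exist _ (hat le (Uni F)) (conj (fun x => hat_idem le (Uni F) x) (Hhat _ (uni_directed F HF))).

Lemma supH_sup F HF : is_sup leH F (supH F HF).
Proof.
  split.
  - intros A HA x Hx. apply hat_incl. exists A; auto.
  - intros U HU x Hx. simpl in Hx. apply (hat_min le (Uni F) (proj1_sig U)); auto.
    + intros a [A [HA Ha]]. apply (HU A HA); auto.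
    + apply hd_lower.
    + apply hd_dsup.
Qed.

Lemma H_dcpo : dcpo leH.
Proof.
  split.
  - split; [|split].
    + intros A x Hx; auto.
    + intros [A HA] [B HB] H1 H2. unfold hatDirSets_le in *; simpl in *.
      assert (A = B) as E.
      { apply functional_extensionality; intro x; apply propositional_extensionality; split;
        [apply H1|apply H2]. }
      subst B. f_equal. apply proof_irrelevance.
    + intros A B C H1 H2 x Hx. apply H2, H1, Hx.
  - intros F HF. exists (supH F HF). apply supH_sup.
Qed.

Lemma principal_mcp : Mcp le leH (principal le HX).
Proof.
  pose proof HX as [Hr [Hanti Ht]].
  intros D s HD Hs. split.
  - intros z [d [Hd ->]]. intros x Hx. simpl in *. unfold down in *.
    apply Ht with d; auto. apply (proj1 Hs); auto.
  - intros U HU x Hx. simpl in Hx. unfold down in Hx.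
    apply (hd_lower U s x); auto.
    apply (hd_dsup U D s HD); auto.
    intros d Hd. apply (HU (principal le HX d)). exists d; auto. simpl. unfold down. auto.
Qed.

Lemma principal_sup (A : H) : is_sup leH (image (principal le HX) (proj1_sig A)) A.
Proof.
  pose proof HX as [Hr [Hanti Ht]].
  split.
  - intros z [a [Ha ->]] x Hx. simpl in Hx. unfold down in Hx. apply (hd_lower A a x); auto.
  - intros U HU x Hx. apply (HU (principal le HX x)). exists x; auto. simpl. unfold down; auto.
Qed.

Lemma part2 : directed_completion le leH (principal le HX).
Proof.
  apply (general_completion le leH (principal le HX) (fun A => proj1_sig A) HX H_dcpo).
  - apply principal_mcp.
  - intros A. split. apply (proj2 (proj2_sig A)). apply principal_sup.
  - intros d y Hdy. exact Hdy.
  - intros D y HD Hy. apply (proj2 Hy (supH D HD)). apply supH_sup.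
  - intros x. pose proof HX as [Hr _]. simpl. unfold down. split; auto.
Qed.


Lemma part1 : forall (Xb : Type) (leb : Xb -> Xb -> Prop) (iota : X -> Xb),
  directed_completion le leb iota -> forall y : Xb, up leb (range iota) y.
Proof.
  intros Xb leb iota [HXb [Hiota Huniv]].
  pose proof HX as [Hr _].
  pose proof HXb as [[Hrb _] _].
  destruct part2 as [HHd [Hp HunivH]].
  destruct (Huniv _ _ HHd (principal le HX) Hp) as [Phi [[HPhi HPhij] _]].
  destruct (HunivH Xb leb HXb iota Hiota) as [Psi [[HPsi HPsij] _]].
  destruct (Huniv Xb leb HXb iota Hiota) as [Tb [[_ _] Huniq]].
  assert (E : forall y, Psi (Phi y) = y).
  { intro y. transitivity (Tb y).
    - apply (Huniq (fun y => Psi (Phi y))).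
      + apply (mcp_comp leb leH); auto.
      + intros x. rewrite HPhij. apply HPsij.
    - symmetry. apply (Huniq (fun y => y)). apply mcp_id. auto. }
  intros y. exists (image iota (proj1_sig (Phi y))). split; [|split].
  - apply (image_directed le). apply (mcp_mono le leb iota Hr Hiota).
    apply (proj2 (proj2_sig (Phi y))).
  - intros z [a [_ ->]]. exists a; auto.
  - rewrite <- (E y) at 2.
    assert (Hdir : directed leH (image (principal le HX) (proj1_sig (Phi y)))).
    { apply (image_directed le). apply (mcp_mono le leH _ Hr principal_mcp).
      apply (proj2 (proj2_sig (Phi y))). }
    pose proof (HPsi _ _ Hdir (principal_sup (Phi y))) as Hs.
    eapply (is_sup_ext leb); [|exact Hs]. intros z; split.
    + intros [w [[a [Ha ->]] ->]]. exists a; split; auto.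
    + intros [a [Ha ->]]. exists (principal le HX a). rewrite HPsij. split; auto. exists a; auto.
Qed.


Lemma part3_fwd (Y : Type) (leY : Y -> Y -> Prop) (j : X -> Y) :
  dcpo leY -> directed_completion le leY j ->
  (dense leY (range j) /\
   forall (B : X -> Prop) (a : X), directed le B ->
     (hat leY (image j B) (j a) <-> hat le B a)).
Proof.
  intros HY Hc.
  pose proof HX as [Hr [Hanti Ht]].
  pose proof HY as [[HrY [HantiY HtY]] _].
  pose proof Hc as [_ [Hj Huniv]].
  assert (jm := mcp_mono le leY j Hr Hj).
  split.
  - intros y B HB HBc. destruct (part1 Y leY j Hc y) as [D [HD [HDs Hs]]].
    apply (HBc D y HD); auto. intros z Hz. apply HB, HDs, Hz.
  - intros B a HBd. split.
    + intros Ha.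
      destruct part2 as [HHd [Hp _]].
      destruct (Huniv _ _ HHd (principal le HX) Hp) as [Phi [[HPhi HPhij] _]].
      assert (Phim := mcp_mono leY leH Phi HrY HPhi).
      pose (HB := exist (fun A => (forall x, A x <-> hat le A x) /\ directed le A)
                    (hat le B) (conj (fun x => hat_idem le B x) (Hhat B HBd)) : H).
      assert (S : leH (Phi (j a)) HB).
      { apply (Ha (fun y => leH (Phi y) HB)).
        - intros z [b [Hb ->]]. rewrite HPhij. intros x Hx. simpl in *. unfold down in Hx.
          apply (hat_lower le B b x); auto. apply hat_incl; auto.
        - intros y1 y2 H1 H2 x Hx. apply H1. apply (Phim y2 y1 H2). exact Hx.
        - intros D s HD HDs Hs. apply (proj2 (HPhi D s HD Hs)).
          intros w [d [Hd ->]]. exact (HDs d Hd). }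
      rewrite HPhij in S. apply S. simpl. unfold down. auto.
    + intros Ha. apply (Ha (fun x => hat leY (image j B) (j x))).
      * intros b Hb. apply hat_incl. exists b; auto.
      * intros x y Hx Hyx. apply (hat_lower leY _ (j x) (j y) Hx). apply jm; auto.
      * intros D s HD HDs Hs. apply (hat_dsup leY _ (image j D) (j s)).
        -- apply (image_directed le); auto.
        -- intros z [d [Hd ->]]. exact (HDs d Hd).
        -- apply Hj; auto.
Qed.


Lemma part3_bwd (Y : Type) (leY : Y -> Y -> Prop) (j : X -> Y) :
  dcpo leY ->
  dense leY (range j) ->
  (forall (B : X -> Prop) (a : X), directed le B ->
     (hat leY (image j B) (j a) <-> hat le B a)) ->
  directed_completion le leY j.
Proof.
  intros HY Hdense Hh.
  pose proof HX as [Hr [Hanti Ht]].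
  pose proof HY as [[HrY [HantiY HtY]] HsupY].
  assert (sdir : forall b, directed le (fun z => z = b)).
  { intros b. split. exists b; auto. intros x y -> ->. exists b; auto. }
  assert (jm : forall a b, le a b -> leY (j a) (j b)).
  { intros a b Hab.
    assert (Hb : hat le (fun z => z = b) a).
    { apply (hat_lower le _ b a); auto. apply hat_incl; auto. }
    apply (proj2 (Hh _ a (sdir b))) in Hb.
    apply (Hb (fun y => leY y (j b))).
    - intros z [b' [-> ->]]. auto.
    - intros x y Hx Hy. eauto.
    - intros D s _ HDs Hs. apply (proj2 Hs). intros x Hx. exact (HDs x Hx). }
  assert (jemb : forall a b, leY (j a) (j b) -> le a b).
  { intros a b Hab.
    assert (Hb : hat leY (image j (fun z => z = b)) (j a)).
    { apply (hat_lower leY _ (j b) (j a)); auto. apply hat_incl. exists b; auto. }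
    apply (proj1 (Hh _ a (sdir b))) in Hb.
    apply (Hb (fun x => le x b)).
    - intros z ->. auto.
    - intros x y Hx Hy. eauto.
    - intros D s _ HDs Hs. apply (proj2 Hs). intros x Hx. exact (HDs x Hx). }
  assert (Hj : Mcp le leY j).
  { intros D s HD Hs.
    assert (HjD : directed leY (image j D)) by (apply (image_directed le); auto).
    destruct (HsupY _ HjD) as [t Ht'].
    assert (Hst : leY (j s) t).
    { assert (Hs1 : hat le D s) by (apply (hat_dsup le D D s HD); auto; apply hat_incl).
      apply (proj2 (Hh D s HD)) in Hs1.
      apply (Hs1 (fun y => leY y t)).
      - intros z Hz. apply (proj1 Ht'); auto.
      - intros x y Hx Hy. eauto.
      - intros E e _ HEs He. apply (proj2 He). intros x Hx. exact (HEs x Hx). }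
    split.
    - intros z [d [Hd ->]]. apply jm. apply (proj1 Hs); auto.
    - intros u Hu. apply HtY with t; auto. apply (proj2 Ht'). auto. }
  pose (Phi := fun y a => leY (j a) y).
  assert (K : forall B y a, directed le B -> is_sup leY (image j B) y -> leY (j a) y -> hat le B a).
  { intros B y a HB Hy Ha. apply (Hh B a HB).
    apply (hat_lower leY _ y (j a)); auto.
    apply (hat_dsup leY _ (image j B) y); auto.
    - apply (image_directed le); auto.
    - apply hat_incl. }
  pose (S := fun y => directed le (Phi y) /\ is_sup leY (image j (Phi y)) y).
  assert (Cprops : forall D s, directed leY D -> is_sup leY D s -> (forall d, D d -> S d) ->
     directed le (fun a => exists d, D d /\ Phi d a) /\
     is_sup leY (image j (fun a => exists d, D d /\ Phi d a)) s).
  { intros D s HD Hs HS. split.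
    - destruct HD as [[d0 Hd0] HD]. split.
      + destruct (HS d0 Hd0) as [[[a Ha] _] _]. exists a, d0; auto.
      + intros a1 a2 [d1 [Hd1 Ha1]] [d2 [Hd2 Ha2]].
        destruct (HD d1 d2 Hd1 Hd2) as [d3 [Hd3 [H13 H23]]].
        destruct (HS d3 Hd3) as [[_ Hdir] _].
        destruct (Hdir a1 a2) as [z [Hz [Hz1 Hz2]]].
        * unfold Phi in *. eauto.
        * unfold Phi in *. eauto.
        * exists z; split; auto. exists d3; auto.
    - split.
      + intros z [a [[d [Hd Ha]] ->]]. unfold Phi in Ha. apply HtY with d; auto.
        apply (proj1 Hs); auto.
      + intros u Hu. apply (proj2 Hs). intros d Hd. destruct (HS d Hd) as [_ [_ Hsd]].
        apply Hsd. intros w [a [Ha ->]]. apply Hu. exists a; split; auto. exists d; auto. }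
  assert (Ha : forall y, S y).
  { intros y. apply (Hdense y S).
    - intros z [b ->]. split.
      + split. exists b. unfold Phi; auto.
        intros x y' Hx Hy'. exists b. unfold Phi in *. split; auto.
      + split.
        * intros w [a [Ha ->]]. exact Ha.
        * intros u Hu. apply Hu. exists b. split; auto. unfold Phi; auto.
    - intros D s HD HDS Hs. destruct (Cprops D s HD Hs HDS) as [HCd HCs].
      assert (E : forall a, Phi s a <-> hat le (fun a => exists d, D d /\ Phi d a) a).
      { intros a. split.
        - intros Ha. apply (K _ s); auto.
        - revert a. apply hat_min.
          + intros a [d [Hd Ha]]. unfold Phi in *. apply HtY with d; auto. apply (proj1 Hs); auto.
          + intros x y0 Hx Hy0. unfold Phi in *. apply HtY with (j x); auto.
          + intros E0 e HE HEs He. unfold Phi. apply (proj2 (Hj E0 e HE He)).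
            intros w [x [Hx ->]]. exact (HEs x Hx). }
      split.
      + apply (directed_ext le _ _ (fun a => iff_sym (E a))). apply Hhat; auto.
      + split.
        * intros w [a [Ha ->]]. exact Ha.
        * intros u Hu. apply (proj2 HCs). intros w [a [[d [Hd Ha]] ->]]. apply Hu.
          exists a; split; auto. unfold Phi in *. apply HtY with d; auto. apply (proj1 Hs); auto. }
  apply (general_completion le leY j Phi HX HY Hj).
  - exact Ha.
  - intros d y Hdy a Hda. unfold Phi in *. eauto.
  - intros D y HD Hy a Hay. destruct (Cprops D y HD Hy (fun d _ => Ha d)) as [HCd HCs].
    apply (K _ y); auto.
  - intros x. unfold Phi. split; auto.
Qed.

End Main.

Theorem mainTheorem4 (X : Type) (le : X -> X -> Prop) (HX : is_poset le)
  (Hhat : forall D : X -> Prop, directed le D -> directed le (hat le D)) :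
  (* (1) *)
  (forall (Xb : Type) (leb : Xb -> Xb -> Prop) (iota : X -> Xb),
     directed_completion le leb iota ->
     forall y : Xb, up leb (range iota) y)
  /\
  (* (2) *)
  directed_completion le (hatDirSets_le le) (principal le HX)
  /\
  (* (3) *)
  (forall (Y : Type) (leY : Y -> Y -> Prop) (j : X -> Y),
     dcpo leY ->
     (directed_completion le leY j <->
      (dense leY (range j) /\
       forall (B : X -> Prop) (a : X), directed le B ->
         (hat leY (image j B) (j a) <-> hat le B a)))).
Proof.
  split; [|split].
  - exact (part1 le HX Hhat).
  - exact (part2 le HX Hhat).
  - intros Y leY j HY. split.
    + apply (part3_fwd le HX Hhat Y leY j HY).
    + intros [Hd Hh]. apply (part3_bwd le HX Hhat Y leY j HY Hd Hh).
Qed.
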